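(* Let $G=(V(G),E(G))$ be a locally finite, connected weighted graph with the random walk $m^G$ and measure $\nu_G$ defined below, satisfying the standing assumptions below, and let $\Omega\subset V(G)$ be a finite set of vertices with $0<\nu_G(\Omega)<\nu_G(V(G))$. Then $(m^G,\nu_G)$ satisfies a $p$-Poincaré inequality in $\Omega$ for every $p\ge1$.
   Context: Each edge $x\sim y$ has a weight $w_{xy}=w_{yx}>0$, with $w_{xy}=0$ if $x,y$ are not adjacent; locally finite means every vertex has finitely many neighbours; $V(G)$ carries the shortest-path graph distance. $d_x:=\sum_{y\in V(G)}w_{xy}$, $m^G_x:=\frac{1}{d_x}\sum_{y\sim x}w_{xy}\delta_y$, $\nu_G(A):=\sum_{x\in A}d_x$; $\nu_G$ is invariant and reversible for $m^G$. Standing assumption: $\nu_G(V(G))<\infty$. With $m=m^G$, $\nu=\nu_G$: $\partial_m\Omega:=\{x\in V(G)\setminus\Omega: m_x(\Omega)>0\}$, $\Omega_m:=\Omega\cup\partial_m\Omega$; for $u:\Omega\to\mathbb{R}$ and $\psi$ on $\partial_m\Omega$, $u_\psi$ equals $u$ on $\Omega$ and $\psi$ on $\partial_m\Omega$. For $q\ge1$, $(m,\nu)$ satisfies a $q$-Poincaré inequality in $\Omega$ if there is $\lambda>0$ such that $\lambda\int_\Omega|u(x)|^q\,d\nu(x)\le\int_\Omega\int_{\Omega_m}|u_\psi(y)-u(x)|^q\,dm_x(y)\,d\nu(x)+\int_{\partial_m\Omega}|\psi(y)|^q\,d\nu(y)$ for all $u\in L^q(\Omega,\nu)$ and all $\psi\in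 L^q(\partial_m\Omega,\nu)$. *)

(* Defs.v *)
From Stdlib Require Import Reals Lra List Classical ClassicalEpsilon.
From Stdlib Require Import Relations Relation_Operators.
Import ListNotations.
Open Scope R_scope.

(* A locally finite weighted graph on a vertex type V.
   w x y = weight of edge x~y (0 iff not adjacent); nbrs x enumerates
   (without repetition) the finitely many neighbours of x. *)
Record WGraph (V : Type) := {
  w : V -> V -> R;
  w_sym : forall x y, w x y = w y x;
  w_nonneg : forall x y, 0 <= w x y;
  nbrs : V -> list V;
  nbrs_nodup : forall x, NoDup (nbrs x);
  nbrs_spec : forall x y, In y (nbrs x) <-> 0 < w x y
}.
Arguments w {V} _ _ _.
Arguments nbrs {V} _ _.

Definition sumL {V : Type} (f : V -> R) (l : list V) : R :=
  fold_right Rplus 0 (map f l).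

Section G.
Context {V : Type} (G : WGraph V).

Definition adj (x y : V) : Prop := 0 < w G x y.

Definition connected : Prop :=
  forall x y : V, clos_refl_trans V adj x y.

Definition deg (x : V) : R := sumL (fun y => w G x y) (nbrs G x).

(* nu(A) for a finite set A given by a duplicate-free list *)
Definition nu (A : list V) : R := sumL deg A.

(* nu_G(V(G)) = s : the (possibly infinite) sum of the nonnegative family d,
   i.e. the supremum of its finite partial sums. *)
Definition total_measure_is (s : R) : Prop :=
  is_lub (fun r => exists l : list V, NoDup l /\ r = nu l) s.

Definition mx (x : V) (A : list V) : R := sumL (fun y => w G x y / deg x) A.

Definition in_bdry (Om : list V) (y : V) : Prop := ~ In y Om /\ 0 < mx y Om.

Definition V_eq_dec (x y : V) : {x = y} + {x <> y} :=
  excluded_middle_informative (x = y).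

(* duplicate-free enumeration of the (finite) boundary: every boundary vertex
   is a neighbour of a vertex of Omega. *)
Definition bdry_list (Om : list V) : list V :=
  nodup V_eq_dec
    (filter (fun y => if excluded_middle_informative (in_bdry Om y) then true else false)
            (flat_map (nbrs G) Om)).

Definition upsi (Om : list V) (u psi : V -> R) (y : V) : R :=
  if excluded_middle_informative (In y Om) then u y else psi y.

(* |t|^p, with the convention 0^p = 0 *)
Definition absp (t p : R) : R :=
  if Req_EM_T t 0 then 0 else Rpower (Rabs t) p.

(* q-Poincare inequality for (m^G, nu_G) in Omega.  Since Omega and its
   boundary are finite, L^q(Omega,nu) and L^q(d_m Omega,nu) consist of all
   real functions on these sets. *)
Definition poincare (q : R) (Om : list V) : Prop :=
  exists lam : R, 0 < lam /\
    forall u psi : V -> R,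
      lam * sumL (fun x => absp (u x) q * deg x) Om
      <= sumL (fun x =>
            (sumL (fun y =>
                 if excluded_middle_informative (In y Om \/ in_bdry Om y)
                 then absp (upsi Om u psi y - u x) q * (w G x y / deg x)
                 else 0) (nbrs G x)) * deg x) Om
         + sumL (fun y => absp (psi y) q * deg y) (bdry_list Om).

End G.

(* Main.v *)
Require Import Defs.
From Stdlib Require Import Reals List Lra Classical ClassicalEpsilon Relations Relation_Operators.
Open Scope R_scope.

Lemma sumL_nonneg {V : Type} (f : V -> R) l :
  (forall z, In z l -> 0 <= f z) -> 0 <= sumL f l.
Proof.
  induction l as [|a l IH]; unfold sumL; simpl; intros H; [lra|].
  assert (0 <= f a) by (apply H; auto).
  assert (0 <= fold_right Rplus 0 (map f l)) by (apply IH; auto). lra.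
Qed.

Lemma sumL_ge_In {V : Type} (f : V -> R) l a :
  (forall z, In z l -> 0 <= f z) -> In a l -> f a <= sumL f l.
Proof.
  induction l as [|b l IH]; unfold sumL; simpl; intros H Hin; [contradiction|].
  destruct Hin as [->|Hin].
  - assert (0 <= sumL f l) by (apply sumL_nonneg; auto). unfold sumL in *; lra.
  - assert (0 <= f b) by (apply H; auto).
    assert (f a <= sumL f l) by (apply IH; auto). unfold sumL in *; lra.
Qed.

Lemma sumL_le {V : Type} (f g : V -> R) l :
  (forall z, In z l -> f z <= g z) -> sumL f l <= sumL g l.
Proof.
  induction l as [|a l IH]; unfold sumL; simpl; intros H; [lra|].
  assert (f a <= g a) by (apply H; auto).
  assert (fold_right Rplus 0 (map f l) <= fold_right Rplus 0 (map g l)) by (apply IH; auto). lra.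
Qed.

Lemma sumL_scal {V : Type} (f : V -> R) c l :
  sumL (fun x => c * f x) l = c * sumL f l.
Proof.
  induction l as [|a l IH]; unfold sumL in *; simpl; [ring|]. rewrite IH; ring.
Qed.

Lemma sumL_app {V : Type} (f : V -> R) l1 l2 :
  sumL f (l1 ++ l2) = sumL f l1 + sumL f l2.
Proof.
  induction l1 as [|a l IH]; unfold sumL in *; simpl; [ring|]. rewrite IH; ring.
Qed.

Lemma sumL_sub {V : Type} (f : V -> R) l :
  NoDup l -> forall m, incl l m -> (forall z, 0 <= f z) -> sumL f l <= sumL f m.
Proof.
  induction 1 as [|a l Ha Hl IH]; intros m Hinc Hf.
  - apply sumL_nonneg; auto.
  - assert (In a m) by (apply Hinc; simpl; auto).
    destruct (in_split a m H) as [o1 [o2 ->]].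
    rewrite sumL_app. unfold sumL at 1 3; simpl. fold (sumL f l). fold (sumL f o2).
    assert (sumL f l <= sumL f (o1 ++ o2)).
    { apply IH; auto. intros y Hy. assert (In y (o1 ++ a :: o2)) by (apply Hinc; simpl; auto).
      apply in_app_or in H0. apply in_or_app. destruct H0 as [H0|[H0|H0]]; auto.
      subst; contradiction. }
    rewrite sumL_app in H0. lra.
Qed.

Lemma inv_nonneg a : 0 <= a -> 0 <= / a.
Proof.
  intros H. destruct (Req_dec a 0) as [->|Hn]. rewrite Rinv_0; lra.
  left; apply Rinv_0_lt_compat; lra.
Qed.

Lemma absp_nonneg t p : 0 <= absp t p.
Proof. unfold absp. destruct Req_EM_T; [lra|]. unfold Rpower; left; apply exp_pos. Qed.

Lemma absp_nz t p : t <> 0 -> absp t p = Rpower (Rabs t) p.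
Proof. intros H; unfold absp; destruct Req_EM_T; [contradiction|auto]. Qed.

Lemma absp_tri p a b c : 0 < p -> c = a - b ->
  absp c p <= Rpower 2 p * (absp a p + absp b p).
Proof.
  intros Hp Hc.
  assert (H2 : 0 < Rpower 2 p) by (unfold Rpower; apply exp_pos).
  pose proof (absp_nonneg a p). pose proof (absp_nonneg b p).
  destruct (Req_dec c 0) as [E|E].
  { unfold absp at 1; destruct Req_EM_T; [|contradiction].
    apply Rmult_le_pos; lra. }
  rewrite absp_nz by auto.
  assert (Hcab : Rabs c <= Rabs a + Rabs b).
  { subst c. unfold Rminus. rewrite <- (Rabs_Ropp b). apply Rabs_triang. }
  assert (Hcpos : 0 < Rabs c) by (apply Rabs_pos_lt; auto).
  destruct (Rle_dec (Rabs b) (Rabs a)) as [L|L].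
  - assert (Ha : 0 < Rabs a) by lra.
    assert (a <> 0) by (intro; subst; rewrite Rabs_R0 in Ha; lra).
    rewrite (absp_nz a) by auto.
    assert (Rpower (Rabs c) p <= Rpower (2 * Rabs a) p) by (apply Rle_Rpower_l; lra).
    rewrite <- Rpower_mult_distr in H3 by lra.
    assert (0 <= Rpower 2 p * absp b p) by (apply Rmult_le_pos; lra). nra.
  - assert (Hb : 0 < Rabs b) by lra.
    assert (b <> 0) by (intro; subst; rewrite Rabs_R0 in Hb; lra).
    rewrite (absp_nz b) by auto.
    assert (Rpower (Rabs c) p <= Rpower (2 * Rabs b) p) by (apply Rle_Rpower_l; lra).
    rewrite <- Rpower_mult_distr in H3 by lra.
    assert (0 <= Rpower 2 p * absp a p) by (apply Rmult_le_pos; lra). nra.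
Qed.

Section Main.
Context {V : Type} (G : WGraph V) (p : R) (Om : list V).

Definition rhs (u psi : V -> R) : R :=
  sumL (fun x =>
            (sumL (fun y =>
                 if excluded_middle_informative (In y Om \/ in_bdry G Om y)
                 then absp (upsi Om u psi y - u x) p * (w G x y / deg G x)
                 else 0) (nbrs G x)) * deg G x) Om
         + sumL (fun y => absp (psi y) p * deg G y) (bdry_list G Om).

Lemma deg_nonneg x : 0 <= deg G x.
Proof. apply sumL_nonneg; intros; apply w_nonneg. Qed.

Lemma inner_nonneg u psi x y :
  0 <= (if excluded_middle_informative (In y Om \/ in_bdry G Om y)
        then absp (upsi Om u psi y - u x) p * (w G x y / deg G x) else 0).
Proof.
  destruct excluded_middle_informative; [|lra].
  apply Rmult_le_pos; [apply absp_nonneg|]. unfold Rdiv; apply Rmult_le_pos;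
  [apply w_nonneg| apply inv_nonneg, deg_nonneg].
Qed.

Lemma part1_nonneg u psi : 0 <= sumL (fun x =>
            (sumL (fun y =>
                 if excluded_middle_informative (In y Om \/ in_bdry G Om y)
                 then absp (upsi Om u psi y - u x) p * (w G x y / deg G x)
                 else 0) (nbrs G x)) * deg G x) Om.
Proof.
  apply sumL_nonneg; intros; apply Rmult_le_pos; [|apply deg_nonneg].
  apply sumL_nonneg; intros; apply inner_nonneg.
Qed.

Lemma part2_nonneg psi : 0 <= sumL (fun y => absp (psi y) p * deg G y) (bdry_list G Om).
Proof.
  apply sumL_nonneg; intros; apply Rmult_le_pos; [apply absp_nonneg|apply deg_nonneg].
Qed.

Lemma rhs_nonneg u psi : 0 <= rhs u psi.
Proof. unfold rhs. pose proof (part1_nonneg u psi). pose proof (part2_nonneg psi). lra. Qed.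

Lemma term_le u psi x y : In x Om -> In y (nbrs G x) -> (In y Om \/ in_bdry G Om y) ->
  0 < deg G x -> absp (upsi Om u psi y - u x) p * w G x y <= rhs u psi.
Proof.
  intros Hx Hy Hc Hd. unfold rhs.
  pose proof (part2_nonneg psi).
  match goal with |- _ <= ?A + ?B => cut (absp (upsi Om u psi y - u x) p * w G x y <= A); [lra|] end.
  eapply Rle_trans; [|apply (sumL_ge_In _ _ x); [|exact Hx]].
  2:{ intros; apply Rmult_le_pos; [|apply deg_nonneg].
      apply sumL_nonneg; intros; apply inner_nonneg. }
  cbv beta.
  eapply Rle_trans; [|apply Rmult_le_compat_r;
     [apply deg_nonneg| apply (sumL_ge_In (fun y => if excluded_middle_informative (In y Om \/ in_bdry G Om y) then absp (upsi Om u psi y - u x) p * (w G x y / deg G x) else 0) _ y); [intros; apply inner_nonneg| exact Hy]]].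
  destruct excluded_middle_informative; [|contradiction].
  right; field; lra.
Qed.

Lemma bdry_le psi u x b : In x Om -> In b (nbrs G x) -> in_bdry G Om b ->
  absp (psi b) p * deg G b <= rhs u psi.
Proof.
  intros Hx Hb Hbd. unfold rhs. pose proof (part1_nonneg u psi).
  assert (absp (psi b) p * deg G b <= sumL (fun y => absp (psi y) p * deg G y) (bdry_list G Om)); [|lra].
  apply (sumL_ge_In (fun y => absp (psi y) p * deg G y)).
  - intros; apply Rmult_le_pos; [apply absp_nonneg|apply deg_nonneg].
  - unfold bdry_list. apply nodup_In. apply filter_In. split.
    + apply in_flat_map. exists x; auto.
    + destruct excluded_middle_informative; [auto|contradiction].
Qed.

Lemma wdiv_pos a K R0 : 0 < a -> 0 <= R0 -> K * a <= R0 -> K <= / a * R0.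
Proof.
  intros Ha HR H. apply (Rmult_le_reg_l a); [lra|].
  rewrite <- Rmult_assoc, Rinv_r by lra. lra.
Qed.

Lemma path_bound (Hp : 0 < p) x z : clos_refl_trans_1n V (adj G) x z -> ~ In z Om -> In x Om ->
  exists K, 0 < K /\ forall u psi, absp (u x) p <= K * rhs u psi.
Proof.
  assert (H2 : 0 < Rpower 2 p) by (unfold Rpower; apply exp_pos).
  induction 1 as [x|x x' z Hadj Hpath IH]; intros Hz Hx; [contradiction|].
  unfold adj in Hadj.
  assert (Hn : In x' (nbrs G x)) by (apply nbrs_spec; auto).
  assert (Hdx : 0 < deg G x).
  { eapply Rlt_le_trans; [exact Hadj|]. apply (sumL_ge_In (fun y => w G x y)); auto.
    intros; apply w_nonneg. }
  destruct (classic (In x' Om)) as [Hx'|Hx'].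
  - destruct (IH Hz Hx') as [K [HK HB]].
    exists (Rpower 2 p * (K + / w G x x')). split.
    { apply Rmult_lt_0_compat; auto. pose proof (Rinv_0_lt_compat _ Hadj); lra. }
    intros u psi.
    pose proof (HB u psi) as B1.
    pose proof (term_le u psi x x' Hx Hn (or_introl Hx') Hdx) as B2.
    unfold upsi in B2. destruct excluded_middle_informative; [|contradiction].
    apply wdiv_pos in B2; [|auto|apply rhs_nonneg].
    pose proof (absp_tri p (u x') (u x' - u x) (u x) Hp ltac:(ring)).
    pose proof (rhs_nonneg u psi). nra.
  - assert (Hn' : In x (nbrs G x')) by (apply nbrs_spec; rewrite w_sym; auto).
    assert (Hdx' : 0 < deg G x').
    { eapply Rlt_le_trans; [rewrite w_sym in Hadj; exact Hadj|].
      apply (sumL_ge_In (fun y => w G x' y)); auto. intros; apply w_nonneg. }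
    assert (Hbd : in_bdry G Om x').
    { split; auto. unfold mx. eapply Rlt_le_trans;
        [|apply (sumL_ge_In (fun y => w G x' y / deg G x')); [|exact Hx]].
      - apply Rdiv_lt_0_compat; auto. rewrite w_sym; auto.
      - intros; unfold Rdiv; apply Rmult_le_pos; [apply w_nonneg|left; apply Rinv_0_lt_compat; auto]. }
    exists (Rpower 2 p * (/ deg G x' + / w G x x')). split.
    { apply Rmult_lt_0_compat; auto. pose proof (Rinv_0_lt_compat _ Hadj);
      pose proof (Rinv_0_lt_compat _ Hdx'); lra. }
    intros u psi.
    pose proof (bdry_le psi u x x' Hx Hn Hbd) as B1.
    pose proof (term_le u psi x x' Hx Hn (or_intror Hbd) Hdx) as B2.
    unfold upsi in B2. destruct excluded_middle_informative; [contradiction|].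
    apply wdiv_pos in B2; [|auto|apply rhs_nonneg].
    apply wdiv_pos in B1; [|auto|apply rhs_nonneg].
    pose proof (absp_tri p (psi x') (psi x' - u x) (u x) Hp ltac:(ring)).
    pose proof (rhs_nonneg u psi). nra.
Qed.

Lemma combine (l : list V) :
  (forall x, In x l -> exists K, 0 < K /\ forall u psi, absp (u x) p <= K * rhs u psi) ->
  exists K, 0 < K /\ forall x, In x l -> forall u psi, absp (u x) p <= K * rhs u psi.
Proof.
  induction l as [|a l IH]; intros H.
  - exists 1; split; [lra|]; intros; contradiction.
  - destruct (H a (or_introl eq_refl)) as [K1 [HK1 B1]].
    destruct IH as [K2 [HK2 B2]]; [intros; apply H; simpl; auto|].
    exists (K1 + K2); split; [lra|]. intros x [<-|Hx] u psi; pose proof (rhs_nonneg u psi).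
    + pose proof (B1 u psi); nra.
    + pose proof (B2 x Hx u psi); nra.
Qed.

End Main.

Theorem mainTheorem13 (V : Type) (G : WGraph V) (nuV : R)
  (Hconn : connected G) (Htot : total_measure_is G nuV)
  (Om : list V) (HOm : NoDup Om)
  (Hpos : 0 < nu G Om) (Hlt : nu G Om < nuV) :
  forall p : R, 1 <= p -> poincare G p Om.
Proof.
  intros p Hp1. assert (Hp : 0 < p) by lra.
  assert (Hz : exists z, ~ In z Om).
  { apply NNPP; intro Hn.
    assert (Hall : forall z, In z Om).
    { intro z; apply NNPP; intro; apply Hn; eauto. }
    destruct Htot as [_ Hl].
    assert (nuV <= nu G Om); [|lra].
    apply Hl. intros r [l [Hl1 ->]]. unfold nu. apply sumL_sub; auto.
    - intros y _; apply Hall.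
    - intros; apply deg_nonneg. }
  destruct Hz as [z Hz].
  destruct (combine G p Om Om) as [K [HK B]].
  { intros x Hx. apply (path_bound G p Om Hp x z); auto.
    apply clos_rt_rt1n. apply Hconn. }
  exists (/ (K * nu G Om)). split.
  { apply Rinv_0_lt_compat; nra. }
  intros u psi.
  change (/ (K * nu G Om) * sumL (fun x => absp (u x) p * deg G x) Om <= rhs G p Om u psi).
  assert (sumL (fun x => absp (u x) p * deg G x) Om <= sumL (fun x => (K * rhs G p Om u psi) * deg G x) Om).
  { apply sumL_le. intros x Hx. apply Rmult_le_compat_r; [apply deg_nonneg|]. apply B; auto. }
  rewrite sumL_scal in H.
  pose proof (rhs_nonneg G p Om u psi).
  apply (Rmult_le_compat_l (/ (K * nu G Om))) in H; [|left; apply Rinv_0_lt_compat; nra].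
  eapply Rle_trans; [exact H|]. right. unfold nu in *. field. split; lra.
Qed.
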